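(* Let $G$ be an edge-coloured multigraph, $t \ge 5$, $M$ a rainbow matching of maximum size in $G$, $C_0$ the set of colours not used on $M$, and $N$ a $t$-auxiliary matching for $M$. If $v_e z$ is a $(C_0 \cup C_N)$-coloured edge with $e \in M_N$ and $z \notin V(N) \cup V(M\setminus M_N)$, then $z = m(x_e)$ or the edge $v_e z$ has colour $c(e)$.
   Context: A rainbow matching is a matching whose edges have pairwise distinct colours; an edge is $C$-coloured if its colour lies in $C$; $c(e)$ is the colour of edge $e$. Let $V$ be the vertex set of $G$. For a rainbow matching $M$ with unused colour set $C_0$, a $t$-auxiliary matching for $M$ is a matching $N$ each of whose edges has one endpoint in $V\setminus V(M)$ and the other in $V(M)$, such that for each edge of $N$ its pair of endpoints is joined by edges of at least $t$ distinct colours from $C_0$, and no two edges of $N$ intersect the same edge of $M$. $M_N \subseteq M$ is the set of edges of $M$ intersecting an edge of $N$; for $e \in M_N$, $x_e$ is the endpoint of $e$ lying in $V(N)$, $m(x_e)$ the other endpoint of $e$, and $v_e$ the vertex matched to $x_e$ in $N$. $C_N$ is the set of colours of the edges of $M_N$. *)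

(* Defs.v *)
From mathcomp Require Import all_boot.
Set Implicit Arguments. Unset Strict Implicit. Unset Printing Implicit Defensive.

Section Defs.
Variables (V E K : finType).
(* An edge-coloured multigraph: each edge g : E has endpoints src g, tgt g
   (loopless: src g != tgt g) and a colour col g : K.  Parallel edges allowed. *)
Variables (src tgt : E -> V) (col : E -> K).

Definition loopless := forall g : E, src g != tgt g.

Definition incident (v : V) (g : E) : bool := (src g == v) || (tgt g == v).

Definition joins (g : E) (u w : V) : bool :=
  ((src g == u) && (tgt g == w)) || ((src g == w) && (tgt g == u)).

Definition is_matching (M : {set E}) : Prop :=
  forall g h, g \in M -> h \in M -> g != h ->
    forall v, ~~ (incident v g && incident v h).

Definition rainbow (M : {set E}) : Prop := {in M &, injective col}.

Definition rainbow_matching (M : {set E}) : Prop := is_matching M /\ rainbow M.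

Definition max_rainbow_matching (M : {set E}) : Prop :=
  rainbow_matching M /\
  forall M' : {set E}, rainbow_matching M' -> #|M'| <= #|M|.

Definition VM (M : {set E}) : {set V} := [set v | [exists g in M, incident v g]].

Definition unused_colours (M : {set E}) : {set K} := ~: (col @: M).

Definition other_end (g : E) (v : V) : V := if src g == v then tgt g else src g.

(* An auxiliary matching N is a set of vertex pairs (v, x); by convention the
   first component v is the endpoint in V \ V(M), the second x the one in V(M). *)
Definition VN (N : {set V * V}) : {set V} :=
  [set u | [exists p in N, (u == p.1) || (u == p.2)]].

Definition aux_matching (t : nat) (M : {set E}) (N : {set V * V}) : Prop :=
  (forall p, p \in N -> p.1 != p.2) /\
  (forall p q, p \in N -> q \in N -> p != q ->
     [&& p.1 != q.1, p.1 != q.2, p.2 != q.1 & p.2 != q.2]) /\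
  (forall p, p \in N -> (p.1 \notin VM M) && (p.2 \in VM M)) /\
  (forall p, p \in N ->
     t <= #|[set col g | g in [set g : E | joins g p.1 p.2 &&
                                           (col g \in unused_colours M)]]|) /\
  (forall p q, p \in N -> q \in N -> p != q ->
     forall e, e \in M -> ~~ (incident p.2 e && incident q.2 e)).

Definition MN (M : {set E}) (N : {set V * V}) : {set E} :=
  [set e in M | [exists p in N, incident p.2 e]].

Definition CN (M : {set E}) (N : {set V * V}) : {set K} := col @: MN M N.

End Defs.

(* Main.v *)
Require Import Defs.
From mathcomp Require Import all_boot.
Set Implicit Arguments. Unset Strict Implicit. Unset Printing Implicit Defensive.

Lemma joins_inc (V E : finType) (src tgt : E -> V) g u w v :
  joins src tgt g u w -> incident src tgt v g = (v == u) || (v == w).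
Proof.
rewrite /joins /incident => /orP [] /andP [/eqP -> /eqP ->].
  by rewrite !(eq_sym v).
by rewrite orbC !(eq_sym v).
Qed.

Lemma step (V E K : finType) (src tgt : E -> V) (col : E -> K) (S : {set E}) h u w :
  rainbow_matching src tgt col S -> joins src tgt h u w ->
  (forall f, f \in S -> ~~ incident src tgt u f && ~~ incident src tgt w f) ->
  col h \notin col @: S ->
  rainbow_matching src tgt col (h |: S) /\ #|h |: S| = #|S|.+1.
Proof.
move=> [Hm Hr] Hj Hinc Hc.
have hS : h \notin S by apply: contra Hc => hS; apply: imset_f.
split; last by rewrite cardsU1 hS.
have K1 : forall b, b \in S -> forall v, ~~ (incident src tgt v h && incident src tgt v b).
  move=> b bS v; rewrite (joins_inc v Hj); case/andP: (Hinc b bS) => Hu Hw.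
  by apply/negP => /andP [/orP [/eqP ->|/eqP ->]]; rewrite ?(negbTE Hu) ?(negbTE Hw).
split.
- move=> a b; rewrite !in_setU1 => /predU1P [->|aS] /predU1P [->|bS] ab v.
  + by rewrite eqxx in ab.
  + exact: K1.
  + by rewrite andbC; apply: K1.
  + exact: Hm.
- move=> a b; rewrite !in_setU1 => /predU1P [->|aS] /predU1P [->|bS] Hab //.
  + by move: Hc; rewrite Hab (imset_f col bS).
  + by move: Hc; rewrite -Hab (imset_f col aS).
  + exact: Hr.
Qed.

Lemma rm_sub (V E K : finType) (src tgt : E -> V) (col : E -> K) (S M : {set E}) :
  S \subset M -> rainbow_matching src tgt col M -> rainbow_matching src tgt col S.
Proof.
move=> /subsetP sub [Hm Hr]; split.
  by move=> a b aS bS; apply: Hm; apply: sub.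
by move=> a b aS bS; apply: Hr; apply: sub.
Qed.

Lemma notVM (V E : finType) (src tgt : E -> V) (M : {set E}) w f :
  w \notin VM src tgt M -> f \in M -> ~~ incident src tgt w f.
Proof.
move=> H fM; apply: contra H => inc; rewrite inE; apply/existsP; exists f; by rewrite fM inc.
Qed.

Lemma VMP (V E : finType) (src tgt : E -> V) (M : {set E}) w :
  w \in VM src tgt M -> exists2 f, f \in M & incident src tgt w f.
Proof. by rewrite inE => /existsP [f /andP [fM inc]]; exists f. Qed.

Lemma VMI (V E : finType) (src tgt : E -> V) (M : {set E}) w f :
  f \in M -> incident src tgt w f -> w \in VM src tgt M.
Proof. by move=> fM inc; rewrite inE; apply/existsP; exists f; rewrite fM inc. Qed.

Lemma match_eq (V E : finType) (src tgt : E -> V) (M : {set E}) w f1 f2 :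
  is_matching src tgt M -> f1 \in M -> f2 \in M ->
  incident src tgt w f1 -> incident src tgt w f2 -> f1 = f2.
Proof.
move=> Hm f1M f2M i1 i2; apply/eqP; apply: contraT => ne.
by have := Hm _ _ f1M f2M ne w; rewrite i1 i2.
Qed.

Lemma match_not (V E : finType) (src tgt : E -> V) (M : {set E}) w f1 f2 :
  is_matching src tgt M -> f1 \in M -> f2 \in M -> f1 != f2 ->
  incident src tgt w f1 -> ~~ incident src tgt w f2.
Proof.
move=> Hm f1M f2M ne i1; apply/negP => i2.
by move/eqP: ne; apply; apply: (match_eq Hm f1M f2M i1 i2).
Qed.

Lemma other_endP (V E : finType) (src tgt : E -> V) e z w :
  incident src tgt z e -> incident src tgt w e -> z != w -> z = other_end src tgt e w.
Proof.
rewrite /incident /other_end => Hz Hw zw.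
case: ifP => [/eqP sw|/negbT sw].
  by move: Hz; rewrite sw [w == z]eq_sym (negbTE zw) orFb => /eqP.
move: Hw; rewrite (negbTE sw) orFb => /eqP tw.
by move: Hz; rewrite tw [w == z]eq_sym (negbTE zw) orbF => /eqP.
Qed.

Lemma notVN (V : finType) (N : {set V * V}) z q :
  z \notin VN N -> q \in N -> (z != q.1) && (z != q.2).
Proof.
move=> H qN; rewrite -negb_or; apply: contra H => Hor.
by rewrite inE; apply/existsP; exists q; rewrite qN Hor.
Qed.

Lemma col_not (E K : finType) (col : E -> K) (M S : {set E}) c :
  c \in unused_colours col M -> S \subset M -> c \notin col @: S.
Proof.
rewrite inE => H sub; apply: contra H; apply/subsetP; exact: imsetS.
Qed.

Lemma col_not2 (E K : finType) (col : E -> K) (M S : {set E}) e :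
  rainbow col M -> e \in M -> S \subset M -> e \notin S -> col e \notin col @: S.
Proof.
move=> Hr eM /subsetP sub eS; apply/imsetP => [[f fS Hc]].
have := Hr e f eM (sub f fS) Hc => E1; subst f; by rewrite fS in eS.
Qed.

Lemma pick_col (V E K : finType) (src tgt : E -> V) (col : E -> K) t (M : {set E}) q c1 c2 :
  3 <= t ->
  t <= #|[set col g | g in [set g : E | joins src tgt g q.1 q.2 &&
                                           (col g \in unused_colours col M)]]| ->
  exists h, [/\ joins src tgt h q.1 q.2, col h \in unused_colours col M,
               col h != c1 & col h != c2].
Proof.
move=> Ht Hc.
have : ~~ ([set col g | g in [set g : E | joins src tgt g q.1 q.2 &&
                                           (col g \in unused_colours col M)]]
            \subset [set c1; c2]).
  apply/negP => /subset_leq_card; rewrite cards2.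
  by case: (c1 != c2) => /= H; move: (leq_trans Ht (leq_trans Hc H)).
case/subsetPn => x /imsetP [h]; rewrite inE => /andP [Hj Hu] -> Hn.
exists h; split => //; move: Hn; rewrite !inE negb_or => /andP [] //.
Qed.

Lemma notinc_j (V E : finType) (src tgt : E -> V) h u w a :
  joins src tgt h u w -> a != u -> a != w -> ~~ incident src tgt a h.
Proof. by move=> Hj au aw; rewrite (joins_inc a Hj) negb_or au aw. Qed.
Theorem lemma2p7 (V E K : finType) (src tgt : E -> V) (col : E -> K)
  (t : nat) (M : {set E}) (N : {set V * V}) :
  loopless src tgt ->
  5 <= t ->
  max_rainbow_matching src tgt col M ->
  aux_matching src tgt col t M N ->
  forall (e : E) (p : V * V) (g : E) (z : V),
    e \in MN src tgt M N ->
    p \in N -> incident src tgt p.2 e ->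
    (* p = (v_e, x_e) *)
    joins src tgt g p.1 z ->
    col g \in unused_colours col M :|: CN src tgt col M N ->
    z \notin VN N :|: VM src tgt (M :\: MN src tgt M N) ->
    z = other_end src tgt e p.2 \/ col g = col e.
Proof.
move=> _ Ht [[HmM HrM] Hmax] [Hn1 [Hn2 [Hn3 [Hn4 Hn5]]]] e p g z HeMN pN pe Hg Hcol Hz.
have RM : rainbow_matching src tgt col M by [].
have eM : e \in M by move: HeMN; rewrite inE => /andP [].
case: (eqVneq z (other_end src tgt e p.2)) => [->|Hzm]; first by left.
case: (eqVneq (col g) (col e)) => [->|Hce]; first by right.
exfalso.
have Ht3 : 3 <= t by apply: leq_trans Ht.
have [p1VM p2VM] := andP (Hn3 p pN).
move: Hz; rewrite in_setU negb_or => /andP [zVN zVM'].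
have zq : forall q, q \in N -> (z != q.1) && (z != q.2) by move=> q; apply: notVN.
have Nsep : forall q r f1 f2, q \in N -> r \in N -> f1 \in M -> f2 \in M -> f1 != f2 ->
    incident src tgt q.2 f1 -> incident src tgt r.2 f2 ->
    [&& q.1 != r.1, q.1 != r.2, q.2 != r.1 & q.2 != r.2].
  move=> q r f1 f2 qN rN f1M f2M ne i1 i2; apply: Hn2 => //.
  apply/eqP => qr; subst r; move/eqP: ne; apply; exact: (match_eq HmM f1M f2M i1 i2).
have Hfin : forall M', rainbow_matching src tgt col M' -> #|M| < #|M'| -> False.
  by move=> M' RM' Hlt; have := Hmax M' RM'; rewrite leqNgt Hlt.
have cardR : forall R : {set E}, R \subset M -> #|M :\: R| + #|R| = #|M|.
  by move=> R sub; rewrite addnC -(cardsID R M) (setIidPr sub).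
have MNP : forall f, f \in MN src tgt M N -> f \in M /\ exists2 q, q \in N & incident src tgt q.2 f.
  by move=> f; rewrite inE => /andP [fM /existsP [q /andP [qN qf]]]; split => //; exists q.
have FZ : z \notin VM src tgt M \/ exists e', exists2 q, [/\ e' \in M, e' != e, q \in N &
          incident src tgt q.2 e'] & incident src tgt z e'.
  case: (boolP (z \in VM src tgt M)) => [zV|]; [right | by left].
  case/VMP: zV => f fM zf.
  have fMN : f \in MN src tgt M N.
    apply: contraT => fn; rewrite (@VMI _ _ src tgt _ z f) // in zVM'.
    by rewrite in_setD fn fM.
  case: (MNP f fMN) => _ [q qN qf].
  exists f; exists q => //; split => //.
  apply/eqP => fe; subst f; move/eqP: Hzm; apply; apply: other_endP => //.
  by case/andP: (zq p pN).
have FC : col g \in unused_colours col M \/ exists e'', exists2 q, [/\ e'' \in M, e'' != e, q \in N &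
          incident src tgt q.2 e''] & col g = col e''.
  move: Hcol; rewrite in_setU => /orP [|/imsetP [e'' HMN Heq]]; [by left | right].
  case: (MNP e'' HMN) => e''M [q qN qe].
  exists e''; exists q => //; split => //; apply/eqP => E1; subst e''.
  by rewrite Heq eqxx in Hce.
have p1M : forall f, f \in M -> ~~ incident src tgt p.1 f by move=> f; apply: notVM.
have cM : forall q f, q \in N -> f \in M -> ~~ incident src tgt q.1 f.
  by move=> q f qN; apply: notVM; case/andP: (Hn3 q qN).
case: FC => [Hc0 | [e'' [q'' [e''M e''e q''N q''e]] Heq]].
- case: FZ => [zV | [e' [q [e'M e'e qN qe']] ze']].
  + have [R1 C1] := step RM Hg (fun f fM => introT andP (conj (p1M f fM) (notVM zV fM)))
                     (col_not Hc0 (subxx M)).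
    by apply: (Hfin _ R1); rewrite C1.
  + have [h [hj hu hc1 _]] := pick_col (col g) (col g) Ht3 (Hn4 q qN).
    have sub : M :\: [set e'] \subset M := subsetDl _ _.
    have inS : forall f, f \in M :\: [set e'] -> f \in M /\ e' != f.
      by move=> f; rewrite in_setD in_set1 => /andP [fe fM]; rewrite eq_sym.
    have [R1 C1] := step (rm_sub sub RM) hj
      (fun f fS => let: conj fM ef := inS f fS in
         introT andP (conj (cM q f qN fM) (match_not HmM e'M fM ef qe')))
      (col_not hu sub).
    have Hinc : forall f, f \in h |: (M :\: [set e']) ->
        ~~ incident src tgt p.1 f && ~~ incident src tgt z f.
      move=> f; rewrite in_setU1 => /predU1P [->|fS].
        have /and4P [a1 a2 a3 a4] := Nsep p q e e' pN qN eM e'M (ltac:(by rewrite eq_sym)) pe qe'.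
        case/andP: (zq q qN) => z1 z2.
        by rewrite (notinc_j hj a1 a2) (notinc_j hj z1 z2).
      case: (inS f fS) => fM ef.
      by rewrite (p1M f fM) (match_not HmM e'M fM ef ze').
    have Hcc : col g \notin col @: (h |: (M :\: [set e'])).
      rewrite imsetU1 in_setU1 negb_or eq_sym hc1 /=; exact: (col_not Hc0 sub).
    have [R2 C2] := step R1 Hg Hinc Hcc.
    apply: (Hfin _ R2); rewrite C2 C1 -(cardR [set e'] ltac:(by rewrite sub1set)) cards1 addn1 ltnS; exact: ltnSn.
- have cg : col g \in col @: M by rewrite Heq imset_f.
  have two : (forall f, f \in M :\: [set e''] -> ~~ incident src tgt z f) -> False.
    move=> zok.
    have [h [hj hu _ _]] := pick_col (col g) (col g) Ht3 (Hn4 q'' q''N).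
    have sub : M :\: [set e''] \subset M := subsetDl _ _.
    have inS : forall f, f \in M :\: [set e''] -> f \in M /\ e'' != f.
      by move=> f; rewrite in_setD in_set1 => /andP [fe fM]; rewrite eq_sym.
    have [R1 C1] := step (rm_sub sub RM) hj
      (fun f fS => let: conj fM ef := inS f fS in
         introT andP (conj (cM q'' f q''N fM) (match_not HmM e''M fM ef q''e)))
      (col_not hu sub).
    have Hinc : forall f, f \in h |: (M :\: [set e'']) ->
        ~~ incident src tgt p.1 f && ~~ incident src tgt z f.
      move=> f; rewrite in_setU1 => /predU1P [->|fS].
        have /and4P [a1 a2 a3 a4] := Nsep p q'' e e'' pN q''N eM e''M (ltac:(by rewrite eq_sym)) pe q''e.
        case/andP: (zq q'' q''N) => z1 z2.
        by rewrite (notinc_j hj a1 a2) (notinc_j hj z1 z2).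
      case: (inS f fS) => fM ef.
      by rewrite (p1M f fM) (zok f fS).
    have Hcc : col g \notin col @: (h |: (M :\: [set e''])).
      rewrite imsetU1 in_setU1 negb_or; apply/andP; split.
        by apply/eqP => E1; move: hu; rewrite inE -E1 cg.
      by rewrite Heq; apply: (col_not2 HrM e''M sub); rewrite in_setD in_set1 eqxx.
    have [R2 C2] := step R1 Hg Hinc Hcc.
    apply: (Hfin _ R2); rewrite C2 C1 -(cardR [set e''] ltac:(by rewrite sub1set)) cards1 addn1 ltnS; exact: ltnSn.
  case: FZ => [zV | [e' [q [e'M e'e qN qe']] ze']].
    by apply: two => f; rewrite in_setD => /andP [_ fM]; apply: notVM zV fM.
  case: (eqVneq e' e'') => [E1 | ne].
    apply: two => f; rewrite in_setD in_set1 => /andP [fe fM].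
    by apply: (match_not HmM e'M fM _ ze'); rewrite E1 eq_sym.
  have [h1 [h1j h1u _ _]] := pick_col (col g) (col g) Ht3 (Hn4 q qN).
  have [h2 [h2j h2u h2c _]] := pick_col (col h1) (col h1) Ht3 (Hn4 q'' q''N).
  set S0 := M :\: [set e'; e''].
  have sub : S0 \subset M := subsetDl _ _.
  have inS : forall f, f \in S0 -> [/\ f \in M, e' != f & e'' != f].
    by move=> f; rewrite in_setD in_set2 negb_or => /andP [/andP [f1 f2] fM];
       rewrite eq_sym f1 eq_sym f2.
  have I2 : forall f, f \in S0 -> ~~ incident src tgt q''.1 f && ~~ incident src tgt q''.2 f.
    move=> f /inS [fM f1 f2]; by rewrite (cM q'' f q''N fM) (match_not HmM e''M fM f2 q''e).
  have [R1 C1] := step (rm_sub sub RM) h2j I2 (col_not h2u sub).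
  have ne' : e'' != e' by rewrite eq_sym.
  have I1 : forall f, f \in h2 |: S0 -> ~~ incident src tgt q.1 f && ~~ incident src tgt q.2 f.
    move=> f; rewrite in_setU1 => /predU1P [->|fS].
      have /and4P [a1 a2 a3 a4] := Nsep q q'' e' e'' qN q''N e'M e''M ne qe' q''e.
      by rewrite (notinc_j h2j a1 a2) (notinc_j h2j a3 a4).
    case: (inS f fS) => fM f1 f2; by rewrite (cM q f qN fM) (match_not HmM e'M fM f1 qe').
  have Cc1 : col h1 \notin col @: (h2 |: S0).
    by rewrite imsetU1 in_setU1 negb_or eq_sym h2c /=; exact: (col_not h1u sub).
  have [R2 C2] := step R1 h1j I1 Cc1.
  have I0 : forall f, f \in h1 |: (h2 |: S0) -> ~~ incident src tgt p.1 f && ~~ incident src tgt z f.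
    move=> f; rewrite !in_setU1 => /predU1P [->|/predU1P [->|fS]].
    - have /and4P [a1 a2 a3 a4] := Nsep p q e e' pN qN eM e'M ltac:(by rewrite eq_sym) pe qe'.
      case/andP: (zq q qN) => z1 z2.
      by rewrite (notinc_j h1j a1 a2) (notinc_j h1j z1 z2).
    - have /and4P [a1 a2 a3 a4] := Nsep p q'' e e'' pN q''N eM e''M ltac:(by rewrite eq_sym) pe q''e.
      case/andP: (zq q'' q''N) => z1 z2.
      by rewrite (notinc_j h2j a1 a2) (notinc_j h2j z1 z2).
    - case: (inS f fS) => fM f1 f2.
      by rewrite (p1M f fM) (match_not HmM e'M fM f1 ze').
  have Cc0 : col g \notin col @: (h1 |: (h2 |: S0)).
    rewrite !imsetU1 !in_setU1 !negb_or; apply/and3P; split.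
    - by apply/eqP => E1; move: h1u; rewrite inE -E1 cg.
    - by apply/eqP => E1; move: h2u; rewrite inE -E1 cg.
    - by rewrite Heq; apply: (col_not2 HrM e''M sub); rewrite in_setD in_set2 eqxx orbT.
  have [R3 C3] := step R2 Hg I0 Cc0.
  apply: (Hfin _ R3); rewrite C3 C2 C1.
  rewrite -(cardR [set e'; e''] ltac:(by rewrite subUset !sub1set e'M e''M)) cards2 ne.
  by rewrite addn2.
Qed.
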